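(* $|\mathrm{GHZ}\rangle^{\otimes 17}\stackrel{\textrm{SLOCC}}{\longrightarrow}|\Phi^3\rangle^{\otimes 6}$.
   Context: Three parties $A,B,C$. $|\mathrm{GHZ}\rangle=\frac{1}{\sqrt2}(|000\rangle+|111\rangle)$ with one qubit held by each of $A,B,C$. Let $|\Phi\rangle=|00\rangle+|11\rangle$ (unnormalized EPR state). $|\Phi^3\rangle=|\Phi\rangle_{AB}|\Phi\rangle_{AC}|\Phi\rangle_{BC}$ is the (unnormalized) state in which each pair of parties shares one EPR state, so each party holds two qubits. Tensor powers are taken with each party holding its own parts of all copies. $|\psi\rangle\stackrel{\textrm{SLOCC}}{\longrightarrow}|\phi\rangle$ means $|\psi\rangle$ can be transformed into $|\phi\rangle$ with nonzero probability by local operations and classical communication; equivalently, there exist linear operators $A,B,C$ on the respective parties' spaces with $(A\otimes B\otimes C)|\psi\rangle=|\phi\rangle$ up to a nonzero scalar. *)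

(* Defs.v *)
From mathcomp Require Import all_boot all_algebra.
Set Implicit Arguments. Unset Strict Implicit. Unset Printing Implicit Defensive.
Import GRing.Theory Num.Theory.
Local Open Scope ring_scope.

(* A (possibly unnormalized) tripartite state: party A has basis indexed by I,
   party B by J, party C by K; the state is its coefficient function. *)
Definition state3 (C : numClosedFieldType) (I J K : finType) := I -> J -> K -> C.

(* Tensor power: each party holds its own parts of all n copies. *)
Definition tpow3 (C : numClosedFieldType) (I J K : finType) (s : state3 C I J K)
  (n : nat) : state3 C {ffun 'I_n -> I} {ffun 'I_n -> J} {ffun 'I_n -> K} :=
  fun f g h => \prod_(k < n) s (f k) (g k) (h k).

Arguments tpow3 {C I J K} s n _ _ _.

Definition apply3 (C : numClosedFieldType) (I J K I' J' K' : finType)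
  (A : I' -> I -> C) (B : J' -> J -> C) (Cm : K' -> K -> C)
  (s : state3 C I J K) : state3 C I' J' K' :=
  fun i' j' k' => \sum_(i : I) \sum_(j : J) \sum_(k : K)
     A i' i * B j' j * Cm k' k * s i j k.

Definition slocc (C : numClosedFieldType) (I J K I' J' K' : finType)
  (psi : state3 C I J K) (phi : state3 C I' J' K') : Prop :=
  exists (A : I' -> I -> C) (B : J' -> J -> C) (Cm : K' -> K -> C) (c : C),
    c != 0 /\ apply3 A B Cm psi = (fun i' j' k' => c * phi i' j' k').

Definition GHZ (C : numClosedFieldType) : state3 C bool bool bool :=
  fun a b c => if (a == b) && (b == c) then (sqrtC (2 : C))^-1 else 0.

Definition Phi (C : numClosedFieldType) : bool -> bool -> C := fun x y =>
  if x == y then 1 else 0.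

(* |Phi^3> = |Phi>_AB |Phi>_AC |Phi>_BC.  Party A holds (qubit of AB, qubit of AC),
   party B holds (qubit of AB, qubit of BC), party C holds (qubit of AC, qubit of BC). *)
Definition Phi3 (C : numClosedFieldType) : state3 C (bool * bool)%type (bool * bool)%type (bool * bool)%type :=
  fun a b c => Phi C a.1 b.1 * Phi C a.2 c.1 * Phi C b.2 c.2.

(* Main.v *)
Require Import Defs.
From mathcomp Require Import all_boot all_algebra.
From mathcomp Require Import ring.
From Stdlib Require Import FunctionalExtensionality.
Set Implicit Arguments. Unset Strict Implicit. Unset Printing Implicit Defensive.
Import GRing.Theory Num.Theory.
Local Open Scope ring_scope.

Definition SA (C : numClosedFieldType) (a : bool * bool) (r : nat) : C :=
  match a, r with
  | (false, false), 0 => 1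
  | (false, false), 2 => 1
  | (false, false), 4 => 1
  | (false, false), 5 => -1
  | (false, true), 1 => 1
  | (false, true), 5 => 1
  | (true, false), 4 => 1
  | (true, false), 6 => 1
  | (true, true), 0 => 1
  | (true, true), 1 => 1
  | (true, true), 3 => 1
  | (true, true), 6 => -1
  | _, _ => 0
  end.
Definition SB (C : numClosedFieldType) (a : bool * bool) (r : nat) : C :=
  match a, r with
  | (false, false), 0 => 1
  | (false, false), 1 => 1
  | (false, false), 3 => -1
  | (false, false), 5 => 1
  | (false, true), 2 => 1
  | (false, true), 5 => 1
  | (true, false), 3 => 1
  | (true, false), 6 => 1
  | (true, true), 0 => 1
  | (true, true), 2 => -1
  | (true, true), 4 => 1
  | (true, true), 6 => 1
  | _, _ => 0
  end.
Definition SC (C : numClosedFieldType) (a : bool * bool) (r : nat) : C :=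
  match a, r with
  | (false, false), 0 => 1
  | (false, false), 3 => 1
  | (false, false), 4 => -1
  | (false, false), 6 => 1
  | (false, true), 2 => 1
  | (false, true), 4 => 1
  | (true, false), 1 => 1
  | (true, false), 3 => 1
  | (true, true), 0 => 1
  | (true, true), 1 => -1
  | (true, true), 2 => 1
  | (true, true), 5 => 1
  | _, _ => 0
  end.

Lemma strassen (C : numClosedFieldType) a b c :
  \sum_(r < 7) SA C a r * SB C b r * SC C c r = Phi3 C a b c.
Proof.
rewrite !big_ord_recr big_ord0 /=.
case: a => [[] []]; case: b => [[] []]; case: c => [[] []];
rewrite /Phi3 /Phi /=; ring.
Qed.

Notation GG := {ffun 'I_6 -> 'I_7}.
Notation TT := {ffun 'I_17 -> bool}.

Lemma cardGT : (#|GG| <= #|TT|)%N.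
Proof. by rewrite !card_ffun !card_ord card_bool. Qed.

Definition ee (g : GG) : TT := enum_val (widen_ord cardGT (enum_rank g)).

Lemma ee_inj : injective ee.
Proof.
move=> g1 g2 /enum_val_inj H; apply: enum_rank_inj.
by apply: val_inj; move: H => /(congr1 val).
Qed.

Definition Op (C : numClosedFieldType) (S : bool * bool -> nat -> C)
  (F : {ffun 'I_6 -> bool * bool}) (f : TT) : C :=
  \sum_(g : GG | ee g == f) \prod_(k < 6) S (F k) (g k).

Lemma tpowGHZ (C : numClosedFieldType) n f g h :
  tpow3 (GHZ C) n f g h =
  if (f == g) && (g == h) then ((sqrtC (2 : C))^-1) ^+ n else 0.
Proof.
rewrite /tpow3 /GHZ.
case: (boolP [forall k, (f k == g k) && (g k == h k)]) => [/forallP H | /forallPn [k Hk]].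
  have -> : f = g by apply/ffunP => k; case/andP: (H k) => /eqP.
  have -> : g = h by apply/ffunP => k; case/andP: (H k) => _ /eqP.
  rewrite !eqxx /= (eq_bigr (fun _ => (sqrtC (2 : C))^-1)) ?prodr_const ?card_ord //.
  by move=> i _; rewrite !eqxx.
rewrite (bigD1 k) //= (negbTE Hk) mul0r.
case: ifP => // /andP [/eqP fg /eqP gh]; move: Hk; by rewrite fg gh !eqxx.
Qed.

Lemma sum_diag (C : numClosedFieldType) (T : finType) (X : T -> T -> T -> C) c :
  \sum_i \sum_j \sum_k X i j k * (if (i == j) && (j == k) then c else 0)
  = \sum_i X i i i * c.
Proof.
apply: eq_bigr => i _.
rewrite (bigD1 i) //= [X in _ + X]big1 => [|j ji]; last first.
  by rewrite big1 // => k _; rewrite eq_sym (negbTE ji) mulr0.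
rewrite addr0 (bigD1 i) //= [X in _ + X]big1 => [|k ki]; last by rewrite eqxx eq_sym (negbTE ki) mulr0.
by rewrite !eqxx !addr0.
Qed.

Lemma Op_prod (C : numClosedFieldType) SA' SB' SC' F G H (f : TT) :
  Op (C:=C) SA' F f * Op SB' G f * Op SC' H f =
  \sum_(g : GG | ee g == f) ((\prod_(k < 6) SA' (F k) (g k)) *
     (\prod_(k < 6) SB' (G k) (g k)) * (\prod_(k < 6) SC' (H k) (g k))).
Proof.
rewrite /Op.
case: (pickP (fun g => ee g == f)) => [g0 /eqP eg0 | none].
  have P : forall g, (ee g == f) = (g == g0) by move=> g; rewrite -eg0 (inj_eq ee_inj).
  by rewrite !(big_pred1 g0).
by rewrite !big_pred0 ?mul0r.
Qed.

Lemma part_sum (C : numClosedFieldType) (Y : GG -> C) :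
  \sum_(f : TT) \sum_(g : GG | ee g == f) Y g = \sum_(g : GG) Y g.
Proof. by rewrite [RHS](partition_big ee xpredT). Qed.

Theorem theorem1 (C : numClosedFieldType) :
  slocc (tpow3 (GHZ C) 17) (tpow3 (Phi3 C) 6).
Proof.
exists (Op (SA C)), (Op (SB C)), (Op (SC C)), (((sqrtC (2 : C))^-1) ^+ 17).
split.
  by rewrite expf_neq0 // invr_eq0 sqrtC_eq0 pnatr_eq0.
apply: functional_extensionality => F; apply: functional_extensionality => G.
apply: functional_extensionality => H.
rewrite /apply3.
under eq_bigr do under eq_bigr do under eq_bigr do rewrite tpowGHZ.
rewrite (sum_diag (fun i j k => Op (SA C) F i * Op (SB C) G j * Op (SC C) H k)).
rewrite -mulr_suml mulrC; congr (_ * _).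
under eq_bigr do rewrite Op_prod.
rewrite part_sum.
under eq_bigr do rewrite -!big_split /=.
rewrite -(bigA_distr_bigA (fun k (r : 'I_7) => SA C (F k) r * SB C (G k) r * SC C (H k) r)).
by apply: eq_bigr => k _; rewrite strassen.
Qed.
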